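(* Consider the closed compartmental reaction-diffusion system on $\bar{\mathbb{R}}_+^{mN}$ $$\dot X=F^*(X):=-\big(( *_0)^{-1}\otimes I_m\big)\,\Delta_d(X)\,\frac{X}{X^*}+F(X),$$ with $\Delta_d(X)=(\mathbf{d}\otimes I_m)^{\mathrm{T}}( *_1\otimes I_m)R_d(X)(\mathbf{d}\otimes I_m)$, where all objects are as described in the context. Suppose $X:[0,t^*]\to\bar{\mathbb{R}}_+^{mN}$ is any solution of this system. Then for every $k=1,\dots,mN$: if $X_k(0)>0$ then $X_k(t^* )>0$.
   Context: Reaction network: $m$ species, $c$ complexes, $r$ reactions; $Z$ is the $m\times c$ complex stoichiometric matrix (nonnegative integer entries, column $\rho$ gives the species composition of complex $\rho$); $B$ is the $c\times r$ incidence matrix of the directed complex graph (each column has one $+1$ at the substrate complex and one $-1$ at the product complex of the reaction); $x^*\in\mathbb{R}_+^m$ (all entries strictly positive) is a thermodynamic equilibrium and $\mathcal{K}(x^* )=\mathrm{diag}(\kappa_1,\dots,\kappa_r)$ with all $\kappa_j>0$. The reaction vector field is $f(x)=-ZB\mathcal{K}(x^* )B^{\mathrm{T}}\mathrm{Exp}\big(Z^{\mathrm{T}}\mathrm{Ln}(x/x^* )\big)$, where $\mathrm{Ln}$, $\mathrm{Exp}$ act componentwise and $x/x^*$ is the componentwise quotient; since the entries of $\mathrm{Exp}(Z^{\mathrm{T}}\mathrm{Ln}(x/x^* ))$ are the monomials $\prod_i (x_i/x_i^* )^{Z_{i\rho}}$, $f$ extends to $\bar{\mathbb{R}}_+^m$.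 Spatial discretization: a simplicial triangulation $K$ of the spatial domain with $N$ vertices and $N_e$ edges; $\mathbf{d}$ is the $N_e\times N$ matrix that is the transpose of the (oriented) vertex-edge incidence matrix of the 1-skeleton of $K$; $*_0$ is an $N\times N$ positive diagonal matrix (volumes of the dual cells of the vertices) and $*_1$ an $N_e\times N_e$ positive diagonal matrix. $X=((x^1)^{\mathrm{T}},\dots,(x^N)^{\mathrm{T}})^{\mathrm{T}}$ with $x^j\in\bar{\mathbb{R}}_+^m$ the concentrations in compartment $j$, $X^*=((x^* )^{\mathrm{T}},\dots,(x^* )^{\mathrm{T}})^{\mathrm{T}}$, $X/X^*$ the componentwise quotient, $F(X)=(f(x^1)^{\mathrm{T}},\dots,f(x^N)^{\mathrm{T}})^{\mathrm{T}}$. $R_d(X)$ is an $mN_e\times mN_e$ diagonal matrix with $R_d(X)\ge\alpha I$ for some $\alpha>0$, depending continuously differentiably on $X$. $\otimes$ is the Kronecker product and $I_m$ the $m\times m$ identity. *)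

(* Defs.v *)
(* Kronecker product: mxtens (mathcomp-real-closed), index convention
   mxtens_index (i, j) = i * n + j, i.e. the standard Kronecker product. *)
From HB Require Import structures.
From mathcomp Require Import all_boot all_order all_algebra.
From mathcomp Require Import mxtens.
From mathcomp Require Import all_classical all_reals all_analysis.

Set Implicit Arguments.
Unset Strict Implicit.
Unset Printing Implicit Defensive.

Import Order.TTheory GRing.Theory Num.Theory.
Import numFieldNormedType.Exports.
Local Open Scope ring_scope.

Section Defs.
Variable R : realType.

Definition incidence_vec (n : nat) (v : 'I_n -> R) : Prop :=
  exists a b : 'I_n, a != b /\ v a = 1 /\ v b = -1 /\
    (forall k, k != a -> k != b -> v k = 0).

(* B : c x r incidence matrix of the complex graph: column j has +1 at the
   substrate complex and -1 at the product complex of reaction j. *)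
Definition complex_incidence (c r : nat) (B : 'M[R]_(c, r)) : Prop :=
  forall j : 'I_r, incidence_vec (fun i => B i j).

(* d : N_e x N, transpose of the oriented vertex-edge incidence matrix:
   row e has +1 and -1 at the two (distinct) endpoints of edge e. *)
Definition edge_vertex_incidence (Ne N : nat) (d : 'M[R]_(Ne, N)) : Prop :=
  forall e : 'I_Ne, incidence_vec (fun j => d e j).

(* Exp(Z^T Ln(x/x^* )): the vector of monomials prod_i (x_i/x^*_i)^{Z_{i rho}},
   which makes sense on the closed orthant. *)
Definition monomials (m c : nat) (Z : 'M[nat]_(m, c)) (xstar x : 'cV[R]_m)
  : 'cV[R]_c :=
  \col_(rho < c) \prod_(i < m) (x i 0 / xstar i 0) ^+ (Z i rho).

Definition reaction_field (m c r : nat) (Z : 'M[nat]_(m, c)) (B : 'M[R]_(c, r))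
  (kappa : 'rV[R]_r) (xstar : 'cV[R]_m) (x : 'cV[R]_m) : 'cV[R]_m :=
  - (map_mx (fun n : nat => n%:R) Z *m B *m diag_mx kappa *m B^T)
    *m monomials Z xstar x.

(* X = (x^1; ...; x^N) stacked: compartment j, species i sits at index
   mxtens_index (j, i) = j * m + i. *)
Definition compartment (N m : nat) (X : 'cV[R]_(N * m)) (j : 'I_N) : 'cV[R]_m :=
  \col_(i < m) X (mxtens_index (j, i)) 0.

Definition big_F (N m : nat) (f : 'cV[R]_m -> 'cV[R]_m) (X : 'cV[R]_(N * m))
  : 'cV[R]_(N * m) :=
  \col_(k < N * m)
    f (compartment X (mxtens_unindex k).1) (mxtens_unindex k).2 0.

Definition big_Xstar (N m : nat) (xstar : 'cV[R]_m) : 'cV[R]_(N * m) :=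
  (const_mx 1 : 'cV[R]_N) *t xstar.

Definition cdiv (n : nat) (X Y : 'cV[R]_n) : 'cV[R]_n :=
  \col_(k < n) (X k 0 / Y k 0).

(* Delta_d(X) = (d (x) I_m)^T ( *_1 (x) I_m) R_d(X) (d (x) I_m);
   star1 is the diagonal of *_1, RdX the diagonal of R_d(X). *)
Definition Delta_d (N Ne m : nat) (d : 'M[R]_(Ne, N)) (star1 : 'rV[R]_Ne)
  (RdX : 'rV[R]_(Ne * m)) : 'M[R]_(N * m) :=
  (d *t (1%:M : 'M[R]_m))^T *m (diag_mx star1 *t (1%:M : 'M[R]_m))
    *m diag_mx RdX *m (d *t (1%:M : 'M[R]_m)).

Definition Fstar (m c r N Ne : nat) (Z : 'M[nat]_(m, c)) (B : 'M[R]_(c, r))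
  (kappa : 'rV[R]_r) (xstar : 'cV[R]_m) (d : 'M[R]_(Ne, N))
  (star0 : 'rV[R]_N) (star1 : 'rV[R]_Ne)
  (Rd : 'cV[R]_(N * m) -> 'rV[R]_(Ne * m)) (X : 'cV[R]_(N * m))
  : 'cV[R]_(N * m) :=
  - (invmx (diag_mx star0) *t (1%:M : 'M[R]_m)) *m Delta_d d star1 (Rd X)
      *m cdiv X (big_Xstar N xstar)
  + big_F (reaction_field Z B kappa xstar) X.

End Defs.

(* Main.v *)
Require Import Defs.
From HB Require Import structures.
From mathcomp Require Import all_boot all_order all_algebra.
From mathcomp Require Import mxtens.
From mathcomp Require Import all_classical all_reals all_analysis.
From mathcomp Require Import ring lra.
Import Order.TTheory GRing.Theory Num.Theory.
Import numFieldNormedType.Exports.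
Local Open Scope ring_scope.
Local Open Scope classical_set_scope.

Section S.
Variable R : realType.

Lemma sum_tens (m n : nat) (F : 'I_(m*n) -> R) :
  \sum_k F k = \sum_(a < m) \sum_(b < n) F (mxtens_index (a, b)).
Proof.
rewrite pair_big /=.
rewrite (reindex (@mxtens_index m n)) /=; last first.
  by apply: onW_bij; exists (@mxtens_unindex m n); [exact: mxtens_indexK|exact: mxtens_unindexK].
by apply: eq_bigr => -[a b].
Qed.

Lemma tensI_mul (p q m : nat) (A : 'M[R]_(p, q)) (v : 'cV[R]_(q * m)) a i :
  ((A *t (1%:M : 'M[R]_m)) *m v) (mxtens_index (a, i)) 0 =
  \sum_b A a b * v (mxtens_index (b, i)) 0.
Proof.
rewrite mxE sum_tens; apply: eq_bigr => b _.
rewrite (bigD1 i) //= big1 ?addr0.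
  by rewrite tensmxE mxE eqxx mulr1.
by move=> i' /negbTE ii; rewrite tensmxE mxE eq_sym ii mulr0 mul0r.
Qed.

Lemma diag_sum (n : nat) (s : 'rV[R]_n) a (w : 'I_n -> R) :
  \sum_b diag_mx s a b * w b = s 0 a * w a.
Proof.
rewrite (bigD1 a) //= big1 ?addr0; first by rewrite mxE eqxx mulr1n.
by move=> b /negbTE ba; rewrite mxE eq_sym ba mulr0n mul0r.
Qed.

Lemma invmx_diag (n : nat) (s : 'rV[R]_n) : (forall j, s 0 j != 0) ->
  invmx (diag_mx s) = diag_mx (\row_j (s 0 j)^-1).
Proof.
move=> s0.
have H : diag_mx s *m diag_mx (\row_j (s 0 j)^-1) = 1%:M.
  apply/matrixP => a b; rewrite mul_diag_mx !mxE.
  case: (eqVneq a b) => [->|ab]; first by rewrite !mulr1n divff.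
  by rewrite !mulr0n mulr0.
have U : diag_mx s \in unitmx.
  by case: (mulmx1_unit H).
by rewrite -[RHS]mul1mx -(mulVmx U) -mulmxA H mulmx1.
Qed.

Lemma Fstar_entry (m c r N Ne : nat)
  (Z : 'M[nat]_(m, c)) (B : 'M[R]_(c, r)) (kappa : 'rV[R]_r)
  (xstar : 'cV[R]_m) (d : 'M[R]_(Ne, N))
  (star0 : 'rV[R]_N) (star1 : 'rV[R]_Ne)
  (Rd : 'cV[R]_(N * m) -> 'rV[R]_(Ne * m)) (Y : 'cV[R]_(N * m)) j i :
  (forall j, star0 0 j != 0) ->
  Fstar Z B kappa xstar d star0 star1 Rd Y (mxtens_index (j, i)) 0 =
  - ((star0 0 j)^-1 * \sum_e d e j * (star1 0 e * (Rd Y 0 (mxtens_index (e, i)) *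
      \sum_j' d e j' * (Y (mxtens_index (j', i)) 0 / xstar i 0))))
  + reaction_field Z B kappa xstar (compartment Y j) i 0.
Proof.
move=> s0.
rewrite /Fstar /Delta_d mxE; congr (_ + _); last first.
  by rewrite /big_F mxE mxtens_indexK.
rewrite -!mulmxA mulNmx mxE; congr (- _).
rewrite invmx_diag // tensI_mul diag_sum mxE; congr (_ * _).
rewrite trmx_tens trmx1 tensI_mul; apply: eq_bigr => e _; rewrite mxE; congr (_ * _).
rewrite tensI_mul diag_sum; congr (_ * _).
rewrite mul_diag_mx mxE; congr (_ * _).
rewrite tensI_mul; apply: eq_bigr => j' _; congr (_ * _).
rewrite /cdiv /big_Xstar !mxE mxtens_indexK /= mul1r.
by congr (_ / xstar i _); apply: val_inj.
Qed.

Lemma inc_sum2 (n : nat) (v w : 'I_n -> R) a b : a != b -> v a = 1 -> v b = -1 ->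
  (forall k, k != a -> k != b -> v k = 0) -> \sum_k v k * w k = w a - w b.
Proof.
move=> ab va vb v0.
rewrite (bigD1 a) //= (bigD1 b) 1?eq_sym //= big1 ?addr0.
  by rewrite va vb mul1r mulN1r.
by move=> k /andP[ka kb]; rewrite v0 ?mul0r.
Qed.

Arguments inc_sum2 {n v} w {a b}.

Lemma diff_le (N Ne : nat) (d : 'M[R]_(Ne, N)) (w : 'I_Ne -> R) (q : 'I_N -> R) j :
  edge_vertex_incidence d -> (forall e, 0 <= w e) -> (forall j, 0 <= q j) ->
  \sum_e d e j * (w e * \sum_j' d e j' * q j') <= (\sum_e w e) * q j.
Proof.
move=> hd w0 q0; rewrite mulr_suml; apply: ler_sum => e _.
have [a [b [ab [va [vb v0]]]]] := hd e.
rewrite (inc_sum2 q ab va vb v0) mulrCA ler_wpM2l //.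
case: (eqVneq j a) => [->|ja]; first by rewrite va mul1r gerDl oppr_le0.
case: (eqVneq j b) => [->|jb]; first by rewrite vb mulN1r opprB gerBl.
by rewrite v0 // mul0r.
Qed.

Lemma react_le (m c r : nat) (Z : 'M[nat]_(m, c)) (B : 'M[R]_(c, r))
  (kappa : 'rV[R]_r) (xstar : 'cV[R]_m) (x : 'cV[R]_m) i :
  complex_incidence B -> (forall j, 0 < kappa 0 j) ->
  (forall rho, 0 <= monomials Z xstar x rho 0) ->
  - (\sum_jr kappa 0 jr * \sum_rho (Z i rho)%:R * monomials Z xstar x rho 0)
  <= reaction_field Z B kappa xstar x i 0.
Proof.
move=> hB hk hm; rewrite /reaction_field mulNmx mxE lerN2 -!mulmxA mxE.
set mo := monomials Z xstar x.
under eq_bigr => s _ do rewrite !mxE big_distrr /=.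
rewrite exchange_big /=; apply: ler_sum => jr _.
have [a [b [ab [va [vb v0]]]]] := hB jr.
have -> : (diag_mx kappa *m (B^T *m mo)) jr 0 = kappa 0 jr * \sum_s B s jr * mo s 0.
  by rewrite mul_diag_mx !mxE; congr (_ * _); apply: eq_bigr => s _; rewrite mxE.
rewrite (inc_sum2 (fun s => mo s 0) ab va vb v0).
rewrite (eq_bigr (fun s => B s jr * ((Z i s)%:R * (kappa 0 jr * (mo a 0 - mo b 0))))); last first.
  move=> s _; ring.
rewrite (inc_sum2 (fun s => (Z i s)%:R * _) ab va vb v0) -mulrBl.
rewrite mulrCA; apply: ler_wpM2l; first exact: ltW.
apply: (@le_trans _ _ ((Z i a)%:R * mo a 0 + (Z i b)%:R * mo b 0)).
  have := hm a; have := hm b.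
  have : (0 : R) <= (Z i a)%:R by []. have : (0 : R) <= (Z i b)%:R by [].
  move: ((Z i a)%:R) ((Z i b)%:R) (mo a 0) (mo b 0) => za zb ma mb.
  move=> h1 h2 h3 h4; rewrite mulrC.
  nra.
rewrite (bigD1 a) //= (bigD1 b) 1?eq_sym //= addrA lerDl.
by apply: sumr_ge0 => s _; apply: mulr_ge0.
Qed.

Lemma mono_factor (m c : nat) (Z : 'M[nat]_(m, c)) (xs x : 'cV[R]_m) i rho :
  (Z i rho)%:R * monomials Z xs x rho 0 =
  (Z i rho)%:R * (x i 0 / xs i 0) *
    \prod_l (x l 0 / xs l 0) ^+ (Z l rho - (l == i))%N.
Proof.
rewrite /monomials mxE.
case E: (Z i rho) => [|n]; first by rewrite !mul0r.
rewrite (bigD1 i) //= [in RHS](bigD1 i) //= E eqxx subn1 /= exprS.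
rewrite -!mulrA; congr (_ * (_ * (_ * _))).
congr (_ * _).
by apply: eq_bigr => l /negbTE li; rewrite li subn0.
Qed.

Lemma mono_ge0 (m c : nat) (Z : 'M[nat]_(m, c)) (xs x : 'cV[R]_m) rho :
  (forall l, 0 < xs l 0) -> (forall l, 0 <= x l 0) -> 0 <= monomials Z xs x rho 0.
Proof.
move=> hxs hx; rewrite mxE; apply: prodr_ge0 => l _.
by apply: exprn_ge0; apply: divr_ge0 => //; apply: ltW.
Qed.

Definition cfun (m c r N Ne : nat)
  (Z : 'M[nat]_(m, c)) (kappa : 'rV[R]_r)
  (xstar : 'cV[R]_m) (star0 : 'rV[R]_N) (star1 : 'rV[R]_Ne)
  (Rd : 'cV[R]_(N * m) -> 'rV[R]_(Ne * m)) (j : 'I_N) (i : 'I_m) (Y : 'cV[R]_(N * m)) : R :=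
  (star0 0 j)^-1 * (\sum_e star1 0 e * Rd Y 0 (mxtens_index (e, i))) / xstar i 0 +
  (\sum_jr kappa 0 jr * \sum_rho (Z i rho)%:R *
      \prod_l (Y (mxtens_index (j, l)) 0 / xstar l 0) ^+ (Z l rho - (l == i))%N)
   / xstar i 0.

Arguments cfun {m c r N Ne}.

Lemma Fstar_lb (m c r N Ne : nat)
  (Z : 'M[nat]_(m, c)) (B : 'M[R]_(c, r)) (kappa : 'rV[R]_r)
  (xstar : 'cV[R]_m) (d : 'M[R]_(Ne, N))
  (star0 : 'rV[R]_N) (star1 : 'rV[R]_Ne)
  (Rd : 'cV[R]_(N * m) -> 'rV[R]_(Ne * m)) (Y : 'cV[R]_(N * m)) j i :
  complex_incidence B ->
  (forall i, 0 < xstar i 0) ->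
  (forall j, 0 < kappa 0 j) ->
  edge_vertex_incidence d ->
  (forall j, 0 < star0 0 j) ->
  (forall e, 0 < star1 0 e) ->
  (forall k, 0 <= Y k 0) -> (forall k, 0 <= Rd Y 0 k) ->
  - (cfun Z kappa xstar star0 star1 Rd j i Y * Y (mxtens_index (j, i)) 0)
  <= Fstar Z B kappa xstar d star0 star1 Rd Y (mxtens_index (j, i)) 0.
Proof.
move=> hB hxs hk hd hs0 hs1 hY hR.
rewrite Fstar_entry; last by move=> j'; rewrite gt_eqF.
rewrite /cfun mulrDl opprD; apply: lerD.
  rewrite lerN2 -!mulrA; apply: ler_wpM2l; first by rewrite invr_ge0 ltW.
  under eq_bigr => e _ do rewrite (mulrA (star1 0 e)).
  apply: le_trans (diff_le _ _ d (fun e => star1 0 e * Rd Y 0 (mxtens_index (e, i)))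
     (fun j' => Y (mxtens_index (j', i)) 0 / xstar i 0) j hd _ _) _.
  - by move=> e; apply: mulr_ge0 => //; apply: ltW.
  - by move=> j'; apply: divr_ge0 => //; apply: ltW.
  by rewrite le_eqVlt; apply/orP; left; apply/eqP; rewrite /=; ring.

apply: (le_trans _ (react_le _ _ _ Z B kappa xstar (compartment Y j) i hB hk _)); last first.
  by move=> rho; apply: mono_ge0 => // l; rewrite mxE.
rewrite lerN2 le_eqVlt; apply/orP; left; apply/eqP.
set y := Y (mxtens_index (j, i)) 0.
transitivity (\sum_jr kappa 0 jr * (y / xstar i 0 * \sum_rho (Z i rho)%:R *
      \prod_l (Y (mxtens_index (j, l)) 0 / xstar l 0) ^+ (Z l rho - (l == i))%N)).
  apply: eq_bigr => jr _; congr (_ * _); rewrite big_distrr /=; apply: eq_bigr => rho _.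
  rewrite mono_factor mxE -/y.
  rewrite (eq_bigr (fun l => (Y (mxtens_index (j, l)) 0 / xstar l 0) ^+ (Z l rho - (l == i))%N)); last by move=> l _; rewrite mxE.
  ring.
rewrite (eq_bigr (fun jr => y / xstar i 0 * (kappa 0 jr * \sum_rho (Z i rho)%:R *
      \prod_l (Y (mxtens_index (j, l)) 0 / xstar l 0) ^+ (Z l rho - (l == i))%N))).
  by rewrite -big_distrr /=; ring.
by move=> jr _; ring.
Qed.

Lemma mx_entry_le (p q : nat) (M : 'M[R]_(p, q)) a b : `|M a b| <= `|M|.
Proof.
rewrite [leRHS]/Num.Def.normr /= mx_normrE.
exact: (le_bigmax _ (fun ij : 'I_p * 'I_q => `|M ij.1 ij.2|) (a, b)).
Qed.

Lemma mx_norm_le (p q : nat) (M : 'M[R]_(p, q)) c : 0 <= c ->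
  (forall a b, `|M a b| <= c) -> `|M| <= c.
Proof.
move=> c0 H; rewrite /Num.Def.normr /= mx_normrE; apply: bigmax_le => // -[a b] _; exact: H.
Qed.

Lemma derivable_coord (U : normedModType R) (p q : nat) (f : U -> 'M[R]_(p, q)) x v a b :
  derivable f x v -> derivable (fun y => f y a b) x v /\
  'D_v (fun y => f y a b) x = 'D_v f x a b.
Proof.
move=> df.
have E : (fun h : R => h^-1 *: (((fun y => f y a b) \o shift x) (h *: v) - f x a b)) =
  (fun M : 'M[R]_(p, q) => M a b) \o (fun h : R => h^-1 *: ((f \o shift x) (h *: v) - f x)).
  by apply/funext => h; rewrite /= !mxE.
have L : (fun h : R => h^-1 *: ((f \o shift x) (h *: v) - f x)) @ 0^' --> 'D_v f x := df.
have L2 : ((fun M : 'M[R]_(p, q) => M a b) \o (fun h : R => h^-1 *: ((f \o shift x) (h *: v) - f x))) @ 0^' --> ('D_v f x) a b.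
  by apply: continuous_cvg => //; exact: coord_continuous.
have D : derivable (fun y => f y a b) x v by rewrite /derivable E; apply/cvg_ex; eexists; exact: L2.
split => //; rewrite /derive E.

exact: cvg_lim L2.
Qed.

Lemma mvt_bound (phi : R -> R) a b C : a <= b ->
  (forall s, a <= s <= b -> derivable phi s 1) ->
  (forall s, a <= s <= b -> `|phi^`() s| <= C) ->
  `|phi b - phi a| <= C * (b - a).
Proof.
move=> ab dphi bphi.
have cphi : {within `[a, b], continuous phi}.
  apply: derivable_within_continuous => s; rewrite in_itv /=; exact: dphi.
have H : forall s, s \in `]a, b[%R -> is_derive s 1 phi (phi^`() s).
  move=> s; rewrite in_itv /= => /andP[h1 h2].
  have hs : a <= s <= b by rewrite !ltW.
  by rewrite derive1E; apply: derivableP; exact: dphi.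
have [c0 c0ab ->] := MVT_segment ab H cphi.
move: c0ab; rewrite in_itv /= => c0ab.
rewrite normrM (@ger0_norm _ (b - a)) ?subr_ge0 //.
by apply: ler_wpM2r; [rewrite subr_ge0 | exact: bphi].
Qed.

Lemma line_deriv (n : nat) (g : 'cV[R]_n -> R) (P e : 'cV[R]_n) s :
  derivable g (s *: e + P) e ->
  derivable (fun t : R => g (t *: e + P)) s 1 /\
  (fun t : R => g (t *: e + P))^`() s = 'D_e g (s *: e + P).
Proof.
have E : (fun h : R => h^-1 *: (((fun t : R => g (t *: e + P)) \o shift s) (h *: 1) - g (s *: e + P))) =
         (fun h : R => h^-1 *: ((g \o shift (s *: e + P)) (h *: e) - g (s *: e + P))).
  by apply/funext => h; rewrite /= [_%:A]mulr1 scalerDl addrA.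
move=> dg; split; first by rewrite /derivable E.
by rewrite derive1E /derive E.
Qed.

Lemma mvt_bound2 (phi : R -> R) h C :
  (forall s, `|s| <= `|h| -> derivable phi s 1 /\ `|phi^`() s| <= C) ->
  `|phi h - phi 0| <= C * `|h|.
Proof.
move=> H.
have H1 s : `|s| <= `|h| -> derivable phi s 1 by move=> hs; exact: (H s hs).1.
have H2 s : `|s| <= `|h| -> `|phi^`() s| <= C by move=> hs; exact: (H s hs).2.
case: (leP 0 h) => h0.
  have := @mvt_bound phi 0 h C h0 _ _; rewrite subr0 (ger0_norm h0); apply.
  - move=> s /andP[s0 sh]; apply: H1; rewrite !ger0_norm //.
  - move=> s /andP[s0 sh]; apply: H2; rewrite !ger0_norm //.
have h0' : h <= 0 by apply: ltW.
have := @mvt_bound phi h 0 C h0' _ _; rewrite sub0r (ler0_norm h0') distrC; apply.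
- move=> s /andP[s0 sh]; apply: H1; rewrite !ler0_norm // lerN2 //.
- move=> s /andP[s0 sh]; apply: H2; rewrite !ler0_norm // lerN2 //.
Qed.

Lemma norm_tri (y z : R) : `|z| <= `|y| + `|y - z|.
Proof. by rewrite -{1}(subKr y z) ler_normB. Qed.

Lemma cont_partials (n : nat) (g : 'cV[R]_n -> R) :
  (forall Y v, derivable g Y v) -> (forall v, continuous (fun Y => 'D_v g Y)) ->
  continuous g.
Proof.
move=> dg cg Y.
pose e (l : 'I_n) : 'cV[R]_n := delta_mx l 0.
pose C := \sum_l (`|'D_(e l) g Y| + 1).
have C0 : 0 <= C by apply: sumr_ge0 => l _; apply: addr_ge0.
have [d0 d0pos Hd0] : exists2 d0 : R, 0 < d0 & forall Z, `|Y - Z| < d0 ->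
    forall l, `|'D_(e l) g Z| <= `|'D_(e l) g Y| + 1.
  have H : \forall Z \near Y, forall l, `|'D_(e l) g Y - 'D_(e l) g Z| < 1.
    apply: (@filter_forall _ _ (fun l Z => `|'D_(e l) g Y - 'D_(e l) g Z| < 1) (nbhs Y) (nbhs_filter Y)) => l.
    exact: (cvgr_dist_lt _ _ (cg (e l) Y) 1 ltr01).
  have /nbhs_normP[d0 /= d0pos Hd] := H.
  exists d0 => // Z hZ l; apply: le_trans (norm_tri ('D_(e l) g Y) _) _.
  by rewrite lerD2l ltW //; apply: Hd.
have key : forall Z, `|Y - Z| < d0 -> `|g Z - g Y| <= C * `|Y - Z|.
  move=> Z hZ; set h := Z - Y.
  have hYZ : `|Y - Z| = `|h| by rewrite distrC.
  pose P (k : nat) : 'cV[R]_n := Y + \col_r (if (r < k)%N then h r 0 else 0).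
  have P0 : P 0%N = Y.
    rewrite /P (_ : \col_r _ = 0) ?addr0 //; by apply/matrixP => a b; rewrite !mxE.
  have Pn : P n = Z.
    rewrite /P (_ : \col_r _ = h); first by rewrite /h addrC subrK.
    by apply/matrixP => a b; rewrite !mxE ltn_ord ord1.
  have PS : forall L : 'I_n, P L.+1 = h L 0 *: e L + P L.
    move=> L; apply/matrixP => a b; rewrite !mxE ord1 ltnS leq_eqVlt eqxx andbT.
    case: (eqVneq a L) => [->|aL]; first by rewrite eqxx ltnn /= mulr1 addr0 addrC.
    have aL' : (a == L :> nat) = false by exact: negbTE aL.
    by rewrite aL' /= mulr0 add0r.
  have -> : g Z - g Y = g (P n) - g (P 0%N) by rewrite Pn P0.
  rewrite -(telescope_sumr (fun k => g (P k)) (leq0n n)) big_mkord.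
  apply: le_trans (ler_norm_sum _ _ _) _.
  rewrite /C mulr_suml; apply: ler_sum => L _.
  rewrite PS; have -> : g (P L) = g (0 *: e L + P L) by rewrite scale0r add0r.
  apply: le_trans (mvt_bound2 (fun t => g (t *: e L + P L)) (h L 0)
     (`|'D_(e L) g Y| + 1) _) _; last first.
    by apply: ler_wpM2l; [apply: addr_ge0 | rewrite hYZ; exact: mx_entry_le].
  move=> s hs; have [D1 D2] := line_deriv _ _ _ _ _ (dg (s *: e L + P L) (e L)).
  split => //; rewrite D2; apply: Hd0.
  apply: le_lt_trans hZ; rewrite hYZ.
  rewrite /P (addrCA (s *: e L)) opprD addrA subrr add0r normrN.
  apply: mx_norm_le => // a b; rewrite !mxE ord1 eqxx andbT.
  case: (eqVneq a L) => [->|aL]; first by rewrite ltnn mulr1 addr0; apply: le_trans hs _; exact: mx_entry_le.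
  rewrite mulr0 add0r; case: ifP => _; last by rewrite normr0.
  by have := mx_entry_le _ _ h a 0; rewrite /h !mxE.
apply/(@cvgrPdist_lt _ _ _ (nbhs Y) (nbhs_filter Y)) => eps eps0.
have r0 : 0 < Num.min d0 (eps / (C + 1)).
  by rewrite /= lt_min d0pos divr_gt0 // ltr_wpDl.
apply: filterS (nbhsx_ballx Y _ r0).
move=> Z; rewrite -ball_normE /ball_ /= lt_min => /andP[hZ1 hZ2].
rewrite distrC; apply: le_lt_trans (key Z hZ1) _.
have x0 : 0 <= `|Y - Z| by [].
move: hZ2 x0; move: (`|Y - Z|) => x hZ2 x0.
move: hZ2; set w := eps / (C + 1) => hZ2.
have w1 : w * (C + 1) = eps by rewrite /w divfK // gt_eqF // ltr_wpDl.
have w0 : 0 < w by rewrite /w divr_gt0 // ltr_wpDl.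
rewrite -w1; nra.
Qed.

Lemma cD (T : topologicalType) (f g : T -> R) :
  continuous f -> continuous g -> continuous (fun x => f x + g x).
Proof. move=> cf cg x; exact: (continuousD (cf x) (cg x)). Qed.

Lemma cM (T : topologicalType) (f g : T -> R) :
  continuous f -> continuous g -> continuous (fun x => f x * g x).
Proof. move=> cf cg x; exact: (continuousM (cf x) (cg x)). Qed.

Lemma cC (T : topologicalType) (a : R) : continuous (fun _ : T => a).
Proof. by move=> x; apply: cst_continuous. Qed.

Lemma csum (T : topologicalType) (I : Type) (s : seq I) (F : I -> T -> R) :
  (forall i, continuous (F i)) -> continuous (fun x => \sum_(i <- s) F i x).
Proof.
move=> cF; elim: s => [|a s IH].
  by under eq_fun do rewrite big_nil; exact: cC.
by under eq_fun do rewrite big_cons; exact: cD.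
Qed.

Lemma cprod (T : topologicalType) (I : Type) (s : seq I) (F : I -> T -> R) :
  (forall i, continuous (F i)) -> continuous (fun x => \prod_(i <- s) F i x).
Proof.
move=> cF; elim: s => [|a s IH].
  by under eq_fun do rewrite big_nil; exact: cC.
by under eq_fun do rewrite big_cons; exact: cM.
Qed.

Lemma cpow (T : topologicalType) (f : T -> R) n :
  continuous f -> continuous (fun x => f x ^+ n).
Proof.
move=> cf; elim: n => [|n IH].
  by under eq_fun do rewrite expr0; exact: cC.
by under eq_fun do rewrite exprS; exact: cM.
Qed.

Lemma ccoord (p q : nat) a b : continuous (fun M : 'M[R]_(p, q) => M a b).
Proof. by move=> M; apply: coord_continuous. Qed.

Lemma cfun_cont (m c r N Ne : nat)
  (Z : 'M[nat]_(m, c)) (kappa : 'rV[R]_r)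
  (xstar : 'cV[R]_m) (star0 : 'rV[R]_N) (star1 : 'rV[R]_Ne)
  (Rd : 'cV[R]_(N * m) -> 'rV[R]_(Ne * m)) j i :
  (forall q, continuous (fun Y => Rd Y 0 q)) ->
  continuous (cfun Z kappa xstar star0 star1 Rd j i).
Proof.
move=> cR; rewrite /cfun.
apply: cD; apply: cM; try apply: cC.
- apply: cM; first exact: cC.
  apply: csum => e; apply: cM; [exact: cC | exact: cR].
- apply: csum => jr; apply: cM; first exact: cC.
  apply: csum => rho; apply: cM; first exact: cC.
  apply: cprod => l; apply: cpow; apply: cM; [exact: ccoord | exact: cC].
Qed.

Lemma is_derive_expMl (Mb t : R) :
  is_derive t 1 (fun s => expR (Mb * s)) (expR (Mb * t) * (Mb *: 1)).
Proof.
have H1 : is_derive t 1 (Mb \*: id) (Mb *: (1 : R)) by apply: is_deriveZ; exact: is_derive_id.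
have H2 : is_derive ((Mb \*: id) t) 1 expR (expR ((Mb \*: id) t)) by exact: is_derive_expR.
exact: (is_derive1_comp H2 H1).
Qed.

End S.

Theorem lemma5 (R : realType) (m c r N Ne : nat)
  (Z : 'M[nat]_(m, c)) (B : 'M[R]_(c, r)) (kappa : 'rV[R]_r)
  (xstar : 'cV[R]_m) (d : 'M[R]_(Ne, N))
  (star0 : 'rV[R]_N) (star1 : 'rV[R]_Ne)
  (Rd : 'cV[R]_(N * m) -> 'rV[R]_(Ne * m)) (alpha : R)
  (X : R -> 'cV[R]_(N * m)) (tstar : R) :
  complex_incidence B ->
  (forall i, 0 < xstar i 0) ->
  (forall j, 0 < kappa 0 j) ->
  edge_vertex_incidence d ->
  (forall j, 0 < star0 0 j) ->
  (forall e, 0 < star1 0 e) ->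
  0 < alpha ->
  (forall Y : 'cV[R]_(N * m), (forall k, 0 <= Y k 0) ->
     forall k, alpha <= Rd Y 0 k) ->
  (forall (Y v : 'cV[R]_(N * m)), derivable Rd Y v) ->
  (forall v : 'cV[R]_(N * m), continuous (fun Y => 'D_v Rd Y)) ->
  0 <= tstar ->
  (forall t, 0 <= t <= tstar -> forall k, 0 <= X t k 0) ->
  {within `[0, tstar], continuous X} ->
  (forall t, 0 < t < tstar ->
     derivable X t 1 /\
     X^`() t = Fstar Z B kappa xstar d star0 star1 Rd (X t)) ->
  forall k : 'I_(N * m), 0 < X 0 k 0 -> 0 < X tstar k 0.
Proof.
move=> hB hxs hk hd hs0 hs1 ha hRd hder hDc ht0 hX hcont hODE k.
have cR : forall q, continuous (fun Y => Rd Y 0 q).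
  move=> q; apply: cont_partials.
    by move=> Y v; exact: (derivable_coord _ _ _ _ _ _ _ 0 q (hder Y v)).1.
  move=> v.
  have -> : (fun Y => 'D_v (fun Y0 => Rd Y0 0 q) Y) = (fun Y => ('D_v Rd Y) 0 q).
    by apply/funext => Y; exact: (derivable_coord _ _ _ _ _ _ _ 0 q (hder Y v)).2.
  move=> Y; exact: (@continuous_comp _ _ _ ('D_v Rd) (fun M : 'rV[R]_(Ne * m) => M 0 q) Y (hDc v Y) (@coord_continuous R 1 (Ne * m) 0 q ('D_v Rd Y))).
move=> hk0; case: k / (mxtens_indexP k) hk0 => j i hk0.
set kk := mxtens_index (j, i).
pose cf := @cfun R m c r N Ne Z kappa xstar star0 star1 Rd j i.
have ccf : continuous cf := @cfun_cont R m c r N Ne Z kappa xstar star0 star1 Rd j i cR.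
have chX : {within `[0, tstar], continuous (cf \o X)}.
  move=> t; exact: (continuous_comp (hcont t) (ccf (X t))).
have [t1 _ hmax] := EVT_max ht0 chX.
set Mb := (cf \o X) t1 in hmax.
pose Xk := fun t => X t kk 0.
pose E := fun s => expR (Mb * s).
pose psi := Xk * E.
have dpsi : forall t, 0 < t < tstar -> is_derive t 1 psi
    (Xk t *: (expR (Mb * t) * (Mb *: 1)) + E t *: Fstar Z B kappa xstar d star0 star1 Rd (X t) kk 0).
  move=> t ht; have [dX dXe] := hODE t ht.
  have [dXk dXke] := derivable_coord _ _ _ _ _ _ _ kk 0 dX.
  have iXk : is_derive t 1 Xk (Fstar Z B kappa xstar d star0 star1 Rd (X t) kk 0).
    by split => //; rewrite dXke -derive1E dXe.
  exact: (is_deriveM iXk (is_derive_expMl _ Mb t)).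
have cE : continuous E.
  move=> s; apply: differentiable_continuous; apply/derivable1_diffP.
  exact: (@ex_derive _ _ _ _ _ _ _ (is_derive_expMl _ Mb s)).
have cpsi : {within `[0, tstar], continuous psi}.
  move=> t; apply: continuousM.
    exact: (continuous_comp (hcont t) (@coord_continuous R (N * m) 1 kk 0 (X t))).
  exact: (continuous_subspaceT cE).
have H1 : forall t, t \in `]0, tstar[%R -> derivable psi t 1.
  move=> t; rewrite in_itv /= => ht; exact: (@ex_derive _ _ _ _ _ _ _ (dpsi t ht)).
have H2 : forall t, t \in `]0, tstar[%R -> 0 <= psi^`() t.
  move=> t; rewrite in_itv /= => ht.
  rewrite derive1E (@derive_val _ _ _ _ _ _ _ (dpsi t ht)).
  have ht' : 0 <= t <= tstar by case/andP: ht => h1 h2; rewrite !ltW.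
  have Y0 := hX t ht'.
  have hlb := @Fstar_lb R m c r N Ne Z B kappa xstar d star0 star1 Rd (X t) j i
    hB hxs hk hd hs0 hs1 Y0 (fun q => le_trans (ltW ha) (hRd _ Y0 q)).
  have hm : cf (X t) <= Mb by have := hmax t; rewrite in_itv /=; apply.
  have Et : 0 < E t by exact: expR_gt0.
  have Xt : 0 <= Xk t by exact: Y0.
  have hlb2 : - (cf (X t) * Xk t) <= Fstar Z B kappa xstar d star0 star1 Rd (X t) kk 0 := hlb.
  change (0 <= Xk t * (E t * (Mb * 1)) + E t * Fstar Z B kappa xstar d star0 star1 Rd (X t) kk 0).
  move: hlb2 hm Et Xt.
  move: (Fstar Z B kappa xstar d star0 star1 Rd (X t) kk 0) (cf (X t)) (E t) (Xk t) => F0 C0 E0 X0.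
  move=> h1 h2 h3 h4.
  have a1 : 0 <= E0 * X0 * (Mb - C0).
    by apply: mulr_ge0; [apply: mulr_ge0; [apply: ltW|] | rewrite subr_ge0].
  have a3 : 0 <= F0 + C0 * X0 by lra.
  have a2 : 0 <= E0 * (F0 + C0 * X0) by apply: mulr_ge0; [apply: ltW|].
  have -> : X0 * (E0 * (Mb * 1)) + E0 * F0 = E0 * X0 * (Mb - C0) + E0 * (F0 + C0 * X0) by ring.
  exact: addr_ge0.
have mono := ger0_derive1_ndecr H1 H2 cpsi.
have := mono 0 tstar (lexx 0) ht0 (lexx tstar).
move=> h0; have h : Xk 0 * expR (Mb * 0) <= Xk tstar * expR (Mb * tstar) := h0.
rewrite mulr0 expR0 mulr1 in h.
have Et : 0 < expR (Mb * tstar) by exact: expR_gt0.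
have h2 := lt_le_trans hk0 h.
by rewrite pmulr_lgt0 in h2.
Qed.
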